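(* Let $d\ge1$, let $\mu$ be a probability distribution supported in the unit hypercube $[0,1]^d$, let $\mu_n$ be an empirical distribution of $\mu$ on $n$ samples, let $\alpha\ge0$, and let $\mathcal{G}$ be a grid partitioning $[0,1]^d$ into axis-aligned cubic cells of side length $n^{-\alpha}$. Then with high probability $\mathrm{Exc}_\mu(\mathcal{G})=\tilde O\!\left(n^{\frac{d\alpha}{2}-\frac12}\right)$.
   Context: For a cell $\Box$ of $\mathcal{G}$, $\mu(\Box)$ and $\mu_n(\Box)$ denote the mass of $\mu$ and $\mu_n$ in $\Box$. The excess of a cell is $\mathrm{Exc}_\mu(\Box)=\max\{0,\mu(\Box)-\mu_n(\Box)\}$ and $\mathrm{Exc}_\mu(\mathcal{G})=\sum_{\Box\in\mathcal{G}}\mathrm{Exc}_\mu(\Box)$. An empirical distribution $\mu_n$ is $\frac1n\sum_{i=1}^n\delta_{x_i}$ with $x_i$ i.i.d. from $\mu$. $\tilde O(\cdot)$ hides polylogarithmic factors in $n$; ''with high probability'' means with probability at least $1-n^{-c}$ for some constant $c>0$. *)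

(* Defs.v *)
From HB Require Import structures.
From mathcomp Require Import all_boot all_order all_algebra.
From mathcomp Require Import all_classical all_reals all_analysis.
Set Implicit Arguments. Unset Strict Implicit. Unset Printing Implicit Defensive.
Import Order.TTheory GRing.Theory Num.Theory numFieldTopology.Exports numFieldNormedType.Exports.
Local Open Scope classical_set_scope.
Local Open Scope ring_scope.

Definition Rd (R : realType) (d : nat) :=
  g_sigma_algebraType (@open 'rV[R]_d).

Definition unit_cube (R : realType) (d : nat) : set (Rd R d) :=
  [set x | forall k : 'I_d, 0 <= x ord0 k <= 1].

Definition cell (R : realType) (d K : nat) (s : R) (j : {ffun 'I_d -> 'I_K})
  : set (Rd R d) :=
  [set x | forall k : 'I_d,
     (j k)%:R * s <= x ord0 k < (j k).+1%:R * s].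

(* Number of cells per axis needed to cover [0,1] with side n^-alpha:
   cells with indices 0 .. floor(n^alpha). *)
Definition ncells (R : realType) (n : nat) (alpha : R) : nat :=
  (`| Num.floor (powR n%:R alpha) |%N).+1.

Definition side (R : realType) (n : nat) (alpha : R) : R :=
  powR n%:R (- alpha).

Definition emp_mass (R : realType) (T : Type) (n : nat)
  (x : 'I_n -> T) (A : set T) : R :=
  (\sum_(i < n) (if `[< A (x i) >] then 1 else 0)) / n%:R.

Definition excess (R : realType) (d n : nat) (alpha : R)
  (mu : set (Rd R d) -> \bar R) (x : 'I_n -> Rd R d) : R :=
  \sum_(j : {ffun 'I_d -> 'I_(ncells n alpha)})
     Num.max 0 (fine (mu (cell (side n alpha) j))
                - emp_mass R x (cell (side n alpha) j)).

Definition mutually_independent (dO : measure_display) (Omega : measurableType dO)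
  (R : realType) (P : probability Omega R) (dT : measure_display)
  (T : measurableType dT) (n : nat) (X : 'I_n -> Omega -> T) : Prop :=
  forall A : 'I_n -> set T, (forall i, measurable (A i)) ->
    P (\bigcap_(i in [set: 'I_n]) (X i @^-1` A i)) =
    (\prod_(i < n) P (X i @^-1` A i))%E.

(* Main.v *)
Require Import Defs.
From HB Require Import structures.
From mathcomp Require Import all_boot all_order all_algebra.
From mathcomp Require Import all_classical all_reals all_analysis.
From mathcomp Require Import ring lra.
Import Order.TTheory GRing.Theory Num.Theory numFieldTopology.Exports numFieldNormedType.Exports.
Local Open Scope classical_set_scope.
Local Open Scope ring_scope.
Set Implicit Arguments. Unset Strict Implicit. Unset Printing Implicit Defensive.
Lemma open_Rd_meas (R : realType) d (A : set (Rd R d)) : open (A : set 'rV[R]_d) -> measurable A.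
Proof. move=> oA. exact: sub_sigma_algebra. Qed.

Lemma coord_lt_meas (R : realType) d (k : 'I_d) (b : R) :
  measurable ([set x | x ord0 k < b] : set (Rd R d)).
Proof.
apply: open_Rd_meas.
apply: (open_comp (f := fun x : 'rV[R]_d => x ord0 k) (D := [set y | y < b])); last exact: open_lt.
move=> x _; exact: coord_continuous.
Qed.

Lemma cell_meas (R : realType) (d K : nat) (s : R) (j : {ffun 'I_d -> 'I_K}) :
  measurable (cell s j).
Proof.
have -> : cell s j = \bigcap_(k in [set: 'I_d])
   (~` [set x : Rd R d | x ord0 k < (j k)%:R * s] `&` [set x | x ord0 k < (j k).+1%:R * s]).
  apply/seteqP; split => x /=.
    by move=> H k _; have /andP[h1 h2] := H k; split => //=; apply/negP; rewrite -leNgt.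
  by move=> H k; have [/= h1 h2] := H k I; rewrite h2 andbT leNgt; apply/negP.
apply: fin_bigcap_measurable; first exact: finite_finset.
move=> k _; apply: measurableI; last exact: coord_lt_meas.
apply: measurableC; exact: coord_lt_meas.
Qed.
Section Aux.
Context (dO : measure_display) (Omega : measurableType dO) (R : realType).

Lemma measure_bigsetU_le (mu : {measure set Omega -> \bar R}) (I : Type) (s : seq I)
  (Q : pred I) (F : I -> set Omega) :
  (forall i, measurable (F i)) ->
  (mu (\big[setU/set0]_(i <- s | Q i) F i) <= \sum_(i <- s | Q i) mu (F i))%E.
Proof.
move=> mF; elim: s => [|a s IH]; first by rewrite !big_nil measure0.
rewrite !big_cons; case: (Q a) => //.
apply: (le_trans (measureU2 _ _ _)) => //; first exact: bigsetU_measurable.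
exact: leeD2l.
Qed.

Lemma measure_bigsetU_eq (mu : {measure set Omega -> \bar R}) (I : choiceType) (s : seq I)
  (F : I -> set Omega) :
  uniq s -> (forall i, measurable (F i)) ->
  (forall i j, i != j -> F i `&` F j = set0) ->
  mu (\big[setU/set0]_(i <- s) F i) = (\sum_(i <- s) mu (F i))%E.
Proof.
move=> + mF dF; elim: s => [|a s IH]; first by rewrite !big_nil measure0.
rewrite !big_cons /= => /andP[nas us].
rewrite measureU //; first by congr (_ + _)%E; exact: (IH us).
- by apply: bigsetU_measurable => i _; exact: mF.
apply/seteqP; split => // w; rewrite -bigcup_seq => -[Fa [i /= si Fi]].
have ai : a != i by apply: contraNneq nas => ->.
by have := dF _ _ ai; move/seteqP => [/(_ w) /= H _]; apply: H.
Qed.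
End Aux.

Definition cnt (T : Type) (R : realType) (n : nat) (E : 'I_n -> set T) (w : T) : R :=
  \sum_(i < n) (if `[< E i w >] then 1 else 0).
Definition cntf (R : realType) (n : nat) (f : {ffun 'I_n -> bool}) : R :=
  \sum_(i < n) (if f i then 1 else 0).
Definition Fpat (T : Type) (n : nat) (E : 'I_n -> set T) (f : {ffun 'I_n -> bool}) : set T :=
  \bigcap_(i in [set: 'I_n]) (if f i then E i else ~` E i).

Lemma cnt_event (T : Type) (R : realType) (n : nat) (E : 'I_n -> set T) (k : R) :
  [set w | cnt R E w <= k] = \big[setU/set0]_(f | cntf R f <= k) Fpat E f.
Proof.
apply/seteqP; split => w.
- move=> /= Hk; rewrite -bigcup_seq_cond.
  exists [ffun i => `[< E i w >]].
    rewrite /= mem_index_enum /=.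
    suff -> : cntf R [ffun i => `[< E i w >]] = cnt R E w by [].
    by apply: eq_bigr => i _; rewrite ffunE.
  move=> i _; rewrite ffunE; case: asboolP => //.
- rewrite -bigcup_seq_cond => -[f /= /andP[_ Hf] Ff].
  suff -> : cnt R E w = cntf R f by [].
  apply: eq_bigr => i _; have := Ff i I.
  by case: (f i) => H; [rewrite asboolT | rewrite asboolF].
Qed.

Section Chernoff.
Context (dO : measure_display) (Omega : measurableType dO) (R : realType)
  (P : probability Omega R) (n : nat) (E : 'I_n -> set Omega) (p : R).
Hypothesis mE : forall i, measurable (E i).
Hypothesis hind : forall f, P (Fpat E f) = (\prod_(i < n) (if f i then p else 1 - p))%:E.
Hypothesis p0 : 0 <= p.
Hypothesis p1 : p <= 1.

Lemma chernoff_low (k u : R) : 0 <= u -> u <= 2^-1 ->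
  (P [set w | (cnt R E w <= k)%R] <= (expR ((u + 2 * u ^+ 2) * k - n%:R * p * u))%:E)%E.
Proof.
move=> u0 u1.
rewrite cnt_event.
apply: le_trans (measure_bigsetU_le _ _ _ _) _.
  move=> f; apply: fin_bigcap_measurable; first exact: finite_finset.
  by move=> i _; case: (f i) => //; apply: measurableC.
rewrite (eq_bigr (fun f : {ffun 'I_n -> bool} => (\prod_(i < n) (if f i then p else 1 - p))%:E)); last by move=> f _; apply: hind.
rewrite sumEFin lee_fin.
set v := u + 2 * u ^+ 2.
set w := fun f : {ffun 'I_n -> bool} => \prod_(i < n) (if f i then p else 1 - p).
have wge0 f : 0 <= w f.
  by apply: prodr_ge0 => i _; case: (f i) => //; rewrite subr_ge0.
have v0 : 0 <= v by rewrite /v; apply: addr_ge0 => //; apply: mulr_ge0 => //; apply: sqr_ge0.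
have step1 : \sum_(f | cntf R f <= k) w f <= \sum_f expR (v * (k - cntf R f)) * w f.
  apply: (@le_trans _ _ (\sum_(f | cntf R f <= k) expR (v * (k - cntf R f)) * w f)).
    apply: ler_sum => f hf; rewrite -{1}(mul1r (w f)); apply: ler_wpM2r => //.
    apply: le_trans (expR_ge1Dx _); rewrite lerDl; apply: mulr_ge0 => //.
    by rewrite subr_ge0.
  rewrite [X in _ <= X](bigID (fun f => cntf R f <= k)) /= lerDl.
  by apply: sumr_ge0 => f _; apply: mulr_ge0 => //; apply: expR_ge0.
set e := expR (- v).
have step2 : \sum_f expR (v * (k - cntf R f)) * w f
    = expR (v * k) * \prod_(i < n) (e * p + (1 - p)).
  have -> : \prod_(i < n) (e * p + (1 - p))
      = \prod_(i < n) \sum_(b : bool) (if b then e * p else 1 - p).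
    by apply: eq_bigr => i _; rewrite big_bool.
  rewrite bigA_distr_bigA mulr_sumr; apply: eq_bigr => f _.
  rewrite mulrBr expRB -mulrA; congr (_ * _).
  rewrite -expRN /w /cntf mulr_sumr -sumrN expR_sum -big_split /=.
  apply: eq_bigr => i _; case: (f i); rewrite ?mulr1 ?mulr0 ?oppr0 ?expR0 ?mul1r //.
have ev : e <= 1 - u.
  have h : 1 <= (1 - u) * expR v.
    apply: (@le_trans _ _ ((1 - u) * (1 + v))).
      rewrite /v; nra.
    by apply: ler_wpM2l; [rewrite subr_ge0; apply: (le_trans u1); rewrite invf_le1 // ler1n | apply: expR_ge1Dx].
  have : (expR v)^-1 * 1 <= (expR v)^-1 * ((1 - u) * expR v).
    by rewrite ler_wpM2l // invr_ge0 expR_ge0.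
  by rewrite mulr1 /e expRN mulrC -mulrA mulfV ?mulr1 // gt_eqF // expR_gt0.
apply: (le_trans step1); rewrite step2 prodr_const card_ord.
have up1 : u * p <= 1.
  apply: (@le_trans _ _ (2^-1 * 1)); first by apply: ler_pM.
  by rewrite mulr1 invf_le1 // ler1n.
apply: (@le_trans _ _ (expR (v * k) * (expR (- (u * p))) ^+ n)).
  apply: ler_wpM2l; first exact: expR_ge0.
  apply: (@le_trans _ _ ((1 - u * p) ^+ n)).
    apply: lerXn2r; rewrite ?nnegrE.
    - by apply: addr_ge0; [apply: mulr_ge0 => //; apply: expR_ge0 | rewrite subr_ge0].
    - by rewrite subr_ge0.
    - have : e * p <= (1 - u) * p by apply: ler_wpM2r.
      by lra.
  apply: lerXn2r; rewrite ?nnegrE ?subr_ge0 //.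
  by have := expR_ge1Dx (- (u * p)); lra.
have E1 : v * k + n%:R * - (u * p) = v * k - n%:R * p * u by lra.
by rewrite -expRM_natl -expRD E1.
Qed.
End Chernoff.

Lemma ln_ge1 (R : realType) (x : R) : 4 <= x -> 1 <= ln x.
Proof.
move=> x4.
have h1 : 2^-1 <= expR (- 2^-1 : R) by have := expR_ge1Dx (- 2^-1 : R); lra.
have h2 : expR (2^-1 : R) <= 2.
  rewrite -[X in X <= _]invrK -expRN.
  set y := expR _ in h1 *.
  have y0 : 0 < y by rewrite /y expR_gt0.
  have yz : y * y^-1 = 1 by rewrite mulfV // gt_eqF.
  have z0 : 0 < y^-1 by rewrite invr_gt0.
  nra.
have h3 : expR (1 : R) <= 4.
  have -> : (1 : R) = 2^-1 + 2^-1 by lra.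
  rewrite expRD; have := expR_ge0 (2^-1 : R); nra.
rewrite -(expRK 1) ler_ln ?posrE ?expR_gt0 //; lra.
Qed.

Lemma card_cells_le (R : realType) (d n : nat) (alpha : R) : (1 <= n)%N -> 0 <= alpha ->
  (#|{ffun 'I_d -> 'I_(ncells n alpha)}|%:R : R) <= 2 ^+ d * powR n%:R (d%:R * alpha).
Proof.
move=> n1 a0.
rewrite card_ffun !card_ord natrX.
have n1R : (1 : R) <= n%:R by rewrite ler1n.
have pa1 : 1 <= powR n%:R alpha.
  by have := ler_powR n1R a0; rewrite powRr0.
have hK : (ncells n alpha)%:R <= 2 * powR n%:R alpha :> R.
  rewrite /ncells -addn1 natrD natr_absz ger0_norm ?floor_ge0 ?powR_ge0 //.
  have := floor_le (powR n%:R alpha); lra.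
rewrite (mulrC d%:R alpha) powRrM powR_mulrn ?powR_ge0 // -exprMn.
apply: lerXn2r; rewrite ?nnegrE //.
Qed.

Lemma sqrt_amgm (R : realType) (s t : R) : 0 < t -> s <= (s ^+ 2 / t + t) / 2.
Proof.
move=> t0.
have h : s ^+ 2 / t + t - 2 * s = (s - t) ^+ 2 / t.
  by field; rewrite gt_eqF.
have : 0 <= (s - t) ^+ 2 / t by apply: divr_ge0; [apply: sqr_ge0 | apply: ltW].
lra.
Qed.

Lemma cell_disj (R : realType) (d K : nat) (s : R) (j j' : {ffun 'I_d -> 'I_K}) :
  0 < s -> j != j' -> cell s j `&` cell s j' = set0.
Proof.
move=> s0 jj; apply/seteqP; split => // x [/= h1 h2].
case/boolP: [exists k, j k != j' k] => [/existsP[k hk]|/existsPn H]; last first.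
  by move/negP: jj; apply; apply/eqP/ffunP => k; apply/eqP; have := H k; rewrite negbK.
have /andP[a1 b1] := h1 k; have /andP[a2 b2] := h2 k.
have c1 : (j k)%:R * s < (j' k).+1%:R * s by apply: le_lt_trans b2.
have c2 : (j' k)%:R * s < (j k).+1%:R * s by apply: le_lt_trans b1.
rewrite ltr_pM2r // ltr_nat ltnS in c1.
rewrite ltr_pM2r // ltr_nat ltnS in c2.
move/negP: hk; apply; apply/eqP/val_inj => /=; apply/eqP; rewrite eqn_leq c1 c2.
by [].
Qed.

Lemma sum_cells_le1 (R : realType) (d K : nat) (s : R) (mu : probability (Rd R d) R) :
  0 < s ->
  \sum_(j : {ffun 'I_d -> 'I_K}) fine (mu (cell s j)) <= 1.
Proof.
move=> s0.
rewrite -lee_fin -sumEFin.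
rewrite (eq_bigr (fun j => mu (cell s j))); last first.
  by move=> j _; rewrite fineK // fin_num_measure //; apply: cell_meas.
rewrite -measure_bigsetU_eq //.
- apply: probability_le1; apply: bigsetU_measurable => j _; exact: cell_meas.
- exact: index_enum_uniq.
- by move=> j; apply: cell_meas.
- by move=> j j' hj; apply: cell_disj.
Qed.

Lemma preimage_meas (R : realType) (d : nat) (dO : measure_display) (Omega : measurableType dO)
  (Y : Omega -> Rd R d) (B : set (Rd R d)) :
  measurable_fun setT Y -> measurable B -> measurable (Y @^-1` B).
Proof. by move=> mY mB; rewrite -[_ @^-1` _]setTI; apply: mY. Qed.

Lemma good_meas (R : realType) (d n : nat) (alpha : R) (mu : set (Rd R d) -> \bar R)
  (dO : measure_display) (Omega : measurableType dO) (X : 'I_n -> Omega -> Rd R d) (b : R) :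
  (forall i, measurable_fun setT (X i)) ->
  measurable [set w | excess alpha mu (fun i => X i w) <= b].
Proof.
move=> mX.
have mf : measurable_fun setT (fun w => excess alpha mu (fun i => X i w)).
  rewrite /excess; apply: measurable_sum => j.
  apply: (measurable_realfun.measurable_maxr (f := fun=> 0)); first exact: measurable_cst.
  apply: measurable_realfun.measurable_funB; first exact: measurable_cst.
  rewrite /emp_mass.
  apply: (measurable_realfun.measurable_funM (g := fun=> n%:R^-1)); last exact: measurable_cst.
  apply: measurable_sum => i.
  have -> : (fun w => if `[< cell (side n alpha) j (X i w) >] then 1 else 0 : R)
      = \1_(X i @^-1` cell (side n alpha) j).
    apply/funext => w; rewrite /indic.
    by case: asboolP => h; [rewrite mem_set | rewrite memNset].
  apply: (@measurable_realfun.measurable_indic _ Omega R setT).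
  apply: preimage_meas => //; exact: cell_meas.
have := mf measurableT _ (@measurable_itv _ `]-oo, b]).
rewrite setTI; congr measurable; apply/seteqP; split => w /=; rewrite in_itv /=; by [].
Qed.

Lemma cnt_meas (dO : measure_display) (Omega : measurableType dO) (R : realType) (n : nat)
  (E : 'I_n -> set Omega) (k : R) :
  (forall i, measurable (E i)) -> measurable [set w | cnt R E w <= k].
Proof.
move=> mE; rewrite cnt_event; apply: bigsetU_measurable => f _.
apply: fin_bigcap_measurable; first exact: finite_finset.
by move=> i _; case: (f i) => //; apply: measurableC.
Qed.

Lemma powR_sq_half (R : realType) (x a : R) : 0 < x ->
  x * (powR x (a / 2 - 2^-1) * powR x (a / 2 - 2^-1)) = powR x a.
Proof.
move=> x0.
rewrite -powRD; last by rewrite (gt_eqF x0) implybT.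
rewrite -{1}(powRr1 (ltW x0)) -powRD; last by rewrite (gt_eqF x0) implybT.
by congr powR; field.
Qed.

Theorem lemmaA2 (R : realType) (d : nat) (alpha : R) :
  (1 <= d)%N -> 0 <= alpha ->
  exists (c C : R) (p N0 : nat), 0 < c /\
  forall n : nat, (N0 <= n)%N ->
  forall (dO : measure_display) (Omega : measurableType dO)
         (P : probability Omega R) (mu : probability (Rd R d) R)
         (X : 'I_n -> Omega -> Rd R d),
    mu (~` @unit_cube R d) = 0%E ->
    (forall i, measurable_fun setT (X i)) ->
    (forall i (B : set (Rd R d)), measurable B -> P (X i @^-1` B) = mu B) ->
    mutually_independent P X ->
    (P [set w | (excess alpha mu (fun i => X i w)
                <= C * (ln n%:R) ^+ p * powR n%:R (d%:R * alpha / 2 - 2^-1))%R]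
      >= (1 - powR n%:R (- c))%:E)%E.
Proof.
move=> d1 a0.
pose A : R := d%:R * alpha + 2.
have A0 : 0 <= A by rewrite /A; apply: addr_ge0 => //; apply: mulr_ge0.
exists 1, (4 * A + 2 ^+ d), 1%N, (2 ^ d + 4)%N; split; first exact: ltr01.
move=> n hn dO Omega P mu X hcube mX hdist hind.
have n4 : (4 <= n)%N by apply: leq_trans hn; rewrite leq_addl.
have n2d : (2 ^ d <= n)%N by apply: leq_trans hn; rewrite leq_addr.
have nR4 : (4 : R) <= n%:R by rewrite ler_nat.
have n0 : 0 < n%:R :> R by lra.
have nn0 : n%:R != 0 :> R by rewrite gt_eqF.
have lnn : 1 <= ln (n%:R : R) by apply: ln_ge1.
set s := side n alpha.
have s0 : 0 < s by rewrite /s /side powR_gt0.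
pose L := A * ln (n%:R : R).
have L0 : 0 <= L by rewrite /L; apply: mulr_ge0 => //; lra.
set B := powR n%:R (d%:R * alpha / 2 - 2^-1).
have B0 : 0 < B by rewrite /B powR_gt0.
pose J := {ffun 'I_d -> 'I_(ncells n alpha)}.
pose pj (j : J) := fine (mu (cell s j)).
have hpj j : mu (cell s j) = (pj j)%:E by rewrite fineK // fin_num_measure //; apply: cell_meas.
have pj0 j : 0 <= pj j by rewrite -lee_fin -hpj measure_ge0.
have pj1 j : pj j <= 1 by rewrite -lee_fin -hpj probability_le1 //; apply: cell_meas.
pose Ej (j : J) := fun i => X i @^-1` cell s j.
have mEj j i : measurable (Ej j i) by apply: preimage_meas => //; apply: cell_meas.
have hindj j f : P (Fpat (Ej j) f) = (\prod_(i < n) (if f i then pj j else 1 - pj j))%:E.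
  rewrite /Fpat.
  have -> : \bigcap_(i in [set: 'I_n]) (if f i then Ej j i else ~` Ej j i)
      = \bigcap_(i in [set: 'I_n]) X i @^-1` (if f i then cell s j else ~` cell s j).
    by apply: eq_bigcapr => i _; case: (f i).
  rewrite hind; last first.
    by move=> i; case: (f i); [apply: cell_meas | apply: measurableC; apply: cell_meas].
  rewrite -prodEFin; apply: eq_bigr => i _.
  rewrite hdist; last first.
    by case: (f i); [apply: cell_meas | apply: measurableC; apply: cell_meas].
  case: (f i); first exact: hpj.
  by rewrite probability_setC ?hpj //; apply: cell_meas.
pose del (j : J) := Num.sqrt (8 * pj j * L / n%:R).
have del0 j : 0 <= del j by apply: sqrtr_ge0.
have hd2 j : del j ^+ 2 = 8 * pj j * L / n%:R.
  rewrite sqr_sqrtr //; apply: divr_ge0; last lra.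
  by apply: mulr_ge0 => //; apply: mulr_ge0 => //; lra.
pose Bad (j : J) := if del j < pj j then [set w | cnt R (Ej j) w <= n%:R * (pj j - del j)] else set0.
have mBad j : measurable (Bad j).
  by rewrite /Bad; case: ifP => _ //; apply: cnt_meas.
have hBad j : (P (Bad j) <= (powR n%:R (- A))%:E)%E.
  rewrite /Bad; case: ifP => hlt; last by rewrite measure0 lee_fin powR_ge0.
  have p0 : 0 < pj j by apply: le_lt_trans hlt.
  pose u := del j / (4 * pj j).
  have u0 : 0 <= u by rewrite /u divr_ge0 //; lra.
  have u1 : u <= 2^-1.
    rewrite /u ler_pdivrMr; last lra.
    lra.
  apply: le_trans (chernoff_low (mEj j) (hindj j) (pj0 j) (pj1 j) (n%:R * (pj j - del j)) u0 u1) _.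
  rewrite lee_fin /powR (negbTE nn0) ler_expR.
  have E1 : (u + 2 * u ^+ 2) * (n%:R * (pj j - del j)) - n%:R * pj j * u
      = - (n%:R * del j ^+ 2 / (8 * pj j)) - n%:R * del j ^+ 3 / (8 * pj j ^+ 2).
    by rewrite /u; field; rewrite gt_eqF.
  have E2 : n%:R * del j ^+ 2 / (8 * pj j) = L.
    by rewrite hd2; field; rewrite nn0 gt_eqF.
  rewrite E1 E2 /L.
  have : 0 <= n%:R * del j ^+ 3 / (8 * pj j ^+ 2).
    apply: divr_ge0; first by apply: mulr_ge0; [lra | apply: exprn_ge0].
    by apply: mulr_ge0; [lra | apply: exprn_ge0; lra].
  lra.
pose U := \big[setU/set0]_(j <- index_enum J) Bad j.
have mU : measurable U by apply: bigsetU_measurable.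
have hU : (P U <= (#|J|%:R * powR n%:R (- A))%:E)%E.
  have h := measure_bigsetU_le P (index_enum J) predT mBad.
  apply: (le_trans h).
  apply: le_trans (_ : (\sum_(j <- index_enum J) (powR n%:R (- A))%:E <= _)%E).
    by apply: lee_sum => j _; apply: hBad.
  by rewrite sumEFin lee_fin sumr_const mulr_natl.
have hJ := card_cells_le d (leq_trans (isT : (1 <= 4)%N) n4) a0.
rewrite -/J in hJ.
have hU2 : #|J|%:R * powR n%:R (- A) <= powR n%:R (- 1).
  have e1 : powR n%:R (d%:R * alpha) * powR n%:R (- A) = (n%:R ^+ 2)^-1.
    rewrite -powRD; last by rewrite nn0 implybT.
    have -> : d%:R * alpha + - A = - 2%:R by rewrite /A; lra.
    by rewrite powRN powR_mulrn // ler0n.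
  rewrite [powR n%:R (- 1)]powRN powRr1 ?ler0n //.
  apply: (@le_trans _ _ (2 ^+ d * (n%:R ^+ 2)^-1)).
    rewrite -e1 mulrA; apply: ler_wpM2r; first exact: powR_ge0.
    exact: hJ.
  have h2d : (2 ^+ d : R) <= n%:R by rewrite -natrX ler_nat.
  set z := (n%:R : R)^-1.
  have nz : n%:R * z = 1 by rewrite /z mulfV.
  have z0 : 0 < z by rewrite /z invr_gt0.
  rewrite -exprVn -/z.
  have h3 : 2 ^+ d * z <= 1 by nra.
  nra.
set good := [set w | _].
have mg : measurable good by apply: good_meas.
have hsub : ~` good `<=` U.
  move=> w ng; apply: contrapT => nU; apply: ng.
  have nB j : ~ Bad j w.
    move=> hb; apply: nU; rewrite /U -bigcup_seq; exists j => //; exact: mem_index_enum.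
  rewrite /good /=.
  have hterm j : Num.max 0 (fine (mu (cell (side n alpha) j))
                  - emp_mass R (fun i => X i w) (cell (side n alpha) j)) <= del j.
    change (Num.max 0 (pj j - cnt R (Ej j) w / n%:R) <= del j).
    rewrite ge_max del0 /=.
    have cnt0 : 0 <= cnt R (Ej j) w by apply: sumr_ge0 => i _; case: ifP.
    have := nB j; rewrite /Bad; case: ifP => hlt hb.
    - have hc : (pj j - del j) * n%:R < cnt R (Ej j) w.
        by rewrite ltNge mulrC; apply/negP.
      rewrite -ltr_pdivlMr // in hc; lra.
    - have hle : pj j <= del j by rewrite leNgt hlt.
      have : 0 <= cnt R (Ej j) w / n%:R by apply: divr_ge0 => //; lra.
      lra.
  apply: (le_trans (ler_sum _ (fun j _ => hterm j))).
  set t := (n%:R * B)^-1.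
  have t0 : 0 < t by rewrite /t invr_gt0 mulr_gt0.
  have hdel j : del j <= (8 * L * B * pj j + t) / 2.
    have := sqrt_amgm (del j) t0; rewrite hd2.
    suff -> : 8 * pj j * L / n%:R / t = 8 * L * B * pj j by [].
    by rewrite /t invrK; field.
  apply: (le_trans (ler_sum _ (fun j _ => hdel j))).
  have -> : \sum_(j : J) (8 * L * B * pj j + t) / 2
      = 4 * L * B * (\sum_(j : J) pj j) + #|J|%:R * t / 2.
    rewrite (eq_bigr (fun j => 4 * L * B * pj j + t / 2)); last by move=> j _; lra.
    rewrite big_split /= -mulr_sumr sumr_const -mulr_natl; lra.
  have hsum : \sum_(j : J) pj j <= 1 by apply: sum_cells_le1.
  have hJt : #|J|%:R * t <= 2 ^+ d * B.
    apply: (@le_trans _ _ (2 ^+ d * powR n%:R (d%:R * alpha) * t)).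
      by apply: ler_wpM2r; [exact: ltW | exact: hJ].
    rewrite -(powR_sq_half _ n0) -/B /t invfM.
    have -> : 2 ^+ d * (n%:R * (B * B)) * (n%:R^-1 * B^-1) = 2 ^+ d * B.
      by field; rewrite nn0 gt_eqF.
    by [].
  have h4 : 4 * L * B * (\sum_(j : J) pj j) <= 4 * L * B.
    rewrite -[X in _ <= X]mulr1; apply: ler_wpM2l => //.
    by apply: mulr_ge0 => //; [apply: mulr_ge0 => //; lra | lra].
  rewrite expr1.
  have h5 : 4 * L * B + 2 ^+ d * B / 2 <= (4 * A + 2 ^+ d) * ln n%:R * B.
    have -> : 4 * L * B + 2 ^+ d * B / 2 = (4 * L + 2 ^+ d / 2) * B by rewrite /L; lra.
    apply: ler_wpM2r; first lra.
    have h2 : (0 : R) <= 2 ^+ d by apply: exprn_ge0.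
    rewrite /L; nra.
  lra.
have hPc : (P (~` good) <= (powR n%:R (- 1))%:E)%E.
  apply: le_trans (_ : (P U <= _)%E).
    apply: le_measure; last exact: hsub.
    - by rewrite inE; apply: measurableC.
    - by rewrite inE.
  by apply: le_trans hU _; rewrite lee_fin.
rewrite -[good]setCK probability_setC; last exact: measurableC.
have fin : P (~` good) \is a fin_num by rewrite fin_num_measure //; apply: measurableC.
rewrite -(fineK fin) in hPc *.
rewrite lee_fin in hPc.
rewrite -EFinB lee_fin.
lra.
Qed.
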